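(* Suppose that $G \leq \mathrm{Homeo}^+(\mathbb{R})$ acts on $\mathbb{R}$ with no fixed points, and that $G^0 \neq 1$. Then the transitivity degree of $G$ is at most $2$.
   Context: $\mathrm{Homeo}^+(\mathbb{R})$ is the group of orientation-preserving homeomorphisms of $\mathbb{R}$, and $G^0$ is the subgroup of compactly supported elements of $G$. The transitivity degree of a group is the supremum of all $k$ such that it admits a faithful action on a set that is transitive on ordered $k$-tuples of distinct elements. *)

(* Defs.v *)
From Stdlib Require Import Reals.
Open Scope R_scope.

Definition homeo_plus (f : R -> R) : Prop :=
  continuity f /\
  (forall x y, x < y -> f x < f y) /\
  exists g : R -> R, continuity g /\
    (forall x, g (f x) = x) /\ (forall y, f (g y) = y).

Definition subgroup_homeo_plus (G : (R -> R) -> Prop) : Prop :=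
  (forall f, G f -> homeo_plus f) /\
  G (fun x => x) /\
  (forall f g, G f -> G g -> G (fun x => f (g x))) /\
  (forall f, G f -> exists g, G g /\
      (forall x, g (f x) = x) /\ (forall y, f (g y) = y)).

Definition no_global_fixed_point (G : (R -> R) -> Prop) : Prop :=
  forall x : R, exists g, G g /\ g x <> x.

(* g has compact support: its support (closure of {x | g x <> x}) is
   compact, i.e. bounded. *)
Definition compactly_supported (g : R -> R) : Prop :=
  exists a b : R, forall x, (x < a \/ b < x) -> g x = x.

(* G^0 <> 1: G contains a nontrivial compactly supported element. *)
Definition G0_nontrivial (G : (R -> R) -> Prop) : Prop :=
  exists g, G g /\ compactly_supported g /\ exists x, g x <> x.

Definition is_group_action (G : (R -> R) -> Prop) (X : Type)
  (act : (R -> R) -> X -> X) : Prop :=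
  (forall x, act (fun t => t) x = x) /\
  (forall f g, G f -> G g -> forall x, act (fun t => f (g t)) x = act f (act g x)).

Definition faithful_action (G : (R -> R) -> Prop) (X : Type)
  (act : (R -> R) -> X -> X) : Prop :=
  forall g, G g -> (forall x, act g x = x) -> forall t, g t = t.

Definition distinct_tuple (X : Type) (k : nat) (s : nat -> X) : Prop :=
  forall i j, (i < k)%nat -> (j < k)%nat -> s i = s j -> i = j.

Definition k_transitive (G : (R -> R) -> Prop) (X : Type)
  (act : (R -> R) -> X -> X) (k : nat) : Prop :=
  (exists s, distinct_tuple X k s) /\
  forall s t, distinct_tuple X k s -> distinct_tuple X k t ->
    exists g, G g /\ forall i, (i < k)%nat -> act g (s i) = t i.

Definition transitivity_degree_le (G : (R -> R) -> Prop) (d : nat) : Prop :=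
  forall (X : Type) (act : (R -> R) -> X -> X) (k : nat),
    is_group_action G X act -> faithful_action G X act ->
    k_transitive G X act k -> (k <= d)%nat.

(* Main.v *)
Require Import Defs.
From Stdlib Require Import Reals Lra Lia Classical FunctionalExtensionality Arith.
Open Scope R_scope.

Definition idout (f : R -> R) (a b : R) := forall u, u < a \/ b < u -> f u = u.
Definition sincr (f : R -> R) := forall x y, x < y -> f x < f y.

Lemma incr_le f : sincr f -> forall x y, x <= y -> f x <= f y.
Proof. intros H x y Hxy. destruct (Rle_lt_or_eq_dec x y Hxy) as [h|h].
 - left; apply H; exact h. - subst; lra. Qed.

Lemma idout_inv k ki c d : idout k c d -> (forall u, ki (k u) = u) -> idout ki c d.
Proof. intros H Hi u Hu. rewrite <- (H u Hu) at 1. apply Hi. Qed.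

Lemma idout_comp f g a1 b1 a2 b2 : idout f a1 b1 -> idout g a2 b2 ->
  idout (fun u => f (g u)) (Rmin a1 a2) (Rmax b1 b2).
Proof. intros Hf Hg u Hu. rewrite Hg. apply Hf.
  destruct Hu; [left|right]; [pose proof (Rmin_l a1 a2)|pose proof (Rmax_l b1 b2)]; lra.
  destruct Hu; [left|right]; [pose proof (Rmin_r a1 a2)|pose proof (Rmax_r b1 b2)]; lra. Qed.

Lemma idout_widen f a b a' b' : idout f a b -> a' <= a -> b <= b' -> idout f a' b'.
Proof. intros H h1 h2 u Hu. apply H. lra. Qed.

Lemma idout_commute f g a1 b1 a2 b2 : sincr f -> sincr g -> idout f a1 b1 -> idout g a2 b2 ->
  b1 < a2 -> forall u, f (g u) = g (f u).
Proof. intros If Ig Hf Hg Hb u.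
  destruct (Rle_lt_dec u b1) as [h|h].
  - rewrite (Hg u) by lra.
    destruct (Rle_lt_dec (f u) b1) as [h2|h2].
    + rewrite (Hg (f u)) by lra. reflexivity.
    + exfalso. set (z := (f u + b1)/2).
      assert (Hz : f z = z) by (apply Hf; unfold z; lra).
      assert (f u < f z) by (apply If; unfold z; lra). unfold z in *; lra.
  - rewrite (Hf u) by lra.
    destruct (Rle_lt_dec (g u) b1) as [h2|h2].
    + exfalso. set (z := (b1 + a2)/2).
      assert (Hz : g z = z) by (apply Hg; unfold z; lra).
      destruct (Rlt_le_dec u a2) as [h3|h3].
      * rewrite (Hg u) in h2 by lra. lra.
      * assert (g z < g u) by (apply Ig; unfold z in *; lra). unfold z in *; lra.
    + rewrite (Hf (g u)) by lra. reflexivity.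
Qed.

Definition Bt (G : (R -> R) -> Prop) t g := G g /\ exists c d, t < c /\ idout g c d.
Definition Rel (G : (R -> R) -> Prop) (X : Type) (act : (R -> R) -> X -> X) t x y :=
  exists g, Bt G t g /\ act g x = y.

Lemma G_sincr G : subgroup_homeo_plus G -> forall f, G f -> sincr f.
Proof. intros [H _] f Hf. destruct (H f Hf) as [_ [h _]]. exact h. Qed.

Lemma act_cancel G X act : is_group_action G X act -> forall f fi, G f -> G fi ->
  (forall x, fi (f x) = x) -> forall x, act fi (act f x) = x.
Proof. intros [H1 H2] f fi Hf Hfi Hc x. rewrite <- H2 by assumption.
  replace (fun t => fi (f t)) with (fun t : R => t) by (apply functional_extensionality; intro; rewrite Hc; reflexivity).
  apply H1. Qed.

Lemma Rel_refl G X act : subgroup_homeo_plus G -> is_group_action G X act -> forall t x, Rel G X act t x x.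
Proof. intros HG Ha t x. exists (fun u => u). split. split. apply HG.
  exists (t+1), (t+1). split. lra. intros u _. reflexivity. apply Ha. Qed.

Lemma Rel_sym G X act : subgroup_homeo_plus G -> is_group_action G X act ->
  forall t x y, Rel G X act t x y -> Rel G X act t y x.
Proof. intros HG Ha t x y [k [[Gk [c [d [Hc Hk]]]] Hxy]].
  destruct HG as [H0 [H1 [H2 H3]]]. destruct (H3 k Gk) as [ki [Gki [Hi1 Hi2]]].
  exists ki. split. split. exact Gki. exists c, d. split. exact Hc. eapply idout_inv; eauto.
  subst y. eapply act_cancel; eauto. Qed.

Lemma Rel_mono G X act t t' x y : t' <= t -> Rel G X act t x y -> Rel G X act t' x y.
Proof. intros Ht [k [[Gk [c [d [Hc Hk]]]] Hxy]]. exists k. split; auto. split; auto.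
  exists c, d. split; auto. lra. Qed.

Lemma Rel_transport G X act : subgroup_homeo_plus G -> is_group_action G X act ->
  forall f, G f -> forall t x y, Rel G X act t x y -> Rel G X act (f t) (act f x) (act f y).
Proof. intros HG Ha f Gf t x y [k [[Gk [c [d [Hc Hk]]]] Hxy]].
  pose proof (G_sincr G HG) as Hinc.
  destruct HG as [H0 [H1 [H2 H3]]]. destruct (H3 f Gf) as [fi [Gfi [Hi1 Hi2]]].
  assert (Gkfi : G (fun u => k (fi u))) by auto.
  exists (fun u => f (k (fi u))). split. split. apply H2; auto.
  exists (f c), (f d). split. apply Hinc; auto.
  intros u Hu. destruct Hu as [Hu|Hu].
  - assert (fi u < c). { destruct (Rlt_le_dec (fi u) c); auto.
      pose proof (incr_le f (Hinc f Gf) _ _ r). rewrite Hi2 in H. lra. }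
    rewrite (Hk (fi u)) by lra. apply Hi2.
  - assert (d < fi u). { destruct (Rlt_le_dec d (fi u)); auto.
      pose proof (incr_le f (Hinc f Gf) _ _ r). rewrite Hi2 in H. lra. }
    rewrite (Hk (fi u)) by lra. apply Hi2.
  - destruct Ha as [Ha1 Ha2]. rewrite (Ha2 f (fun u => k (fi u))) by auto.
    rewrite (Ha2 k fi) by auto.
    rewrite (act_cancel G X act (conj Ha1 Ha2) f fi Gf Gfi Hi1). congruence. Qed.

Lemma ext_step (X : Type) k (t : nat -> X) i p : distinct_tuple X k t -> (i < k)%nat ->
  (forall j, (j < i)%nat -> t j <> p) ->
  exists t', distinct_tuple X k t' /\ (forall j, (j < i)%nat -> t' j = t j) /\ t' i = p.
Proof. intros Hd Hi Hp.
  destruct (classic (exists j, (j < k)%nat /\ t j = p)) as [[j [Hj Htj]]|Hn].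
  - assert (Hij : (i <= j)%nat). { destruct (le_lt_dec i j); auto. exfalso; apply (Hp j); auto. }
    exists (fun n => if Nat.eqb n i then t j else if Nat.eqb n j then t i else t n).
    split; [|split].
    + intros a b Ha Hb E.
      destruct (Nat.eqb_spec a i); destruct (Nat.eqb_spec b i); subst; auto;
      try (destruct (Nat.eqb_spec a j)); try (destruct (Nat.eqb_spec b j)); subst; auto;
      try (apply Hd in E; lia).
    + intros j0 Hj0. destruct (Nat.eqb_spec j0 i); [lia|]. destruct (Nat.eqb_spec j0 j); [lia|auto].
    + rewrite Nat.eqb_refl. exact Htj.
  - exists (fun n => if Nat.eqb n i then p else t n). split; [|split].
    + intros a b Ha Hb E.
      destruct (Nat.eqb_spec a i); destruct (Nat.eqb_spec b i); try lia.
      * exfalso; apply Hn; exists b; auto.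
      * exfalso; apply Hn; exists a; auto.
      * apply Hd; auto.
    + intros j0 Hj0. destruct (Nat.eqb_spec j0 i); [lia|auto].
    + rewrite Nat.eqb_refl. reflexivity.
Qed.

Lemma prefix3 (X : Type) k (s : nat -> X) x y z : (3 <= k)%nat -> distinct_tuple X k s ->
  x <> y -> y <> z -> x <> z ->
  exists t, distinct_tuple X k t /\ t 0%nat = x /\ t 1%nat = y /\ t 2%nat = z.
Proof. intros Hk Hs Hxy Hyz Hxz.
  destruct (ext_step X k s 0 x Hs ltac:(lia) ltac:(intros; lia)) as [t1 [D1 [_ E1]]].
  destruct (ext_step X k t1 1 y D1 ltac:(lia)) as [t2 [D2 [P2 E2]]].
  { intros j Hj. replace j with 0%nat by lia. rewrite E1. auto. }
  destruct (ext_step X k t2 2 z D2 ltac:(lia)) as [t3 [D3 [P3 E3]]].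
  { intros j Hj. destruct j. rewrite P2 by lia. rewrite E1. auto.
    replace j with 0%nat by lia. rewrite E2. auto. }
  exists t3. split; auto. split; [|split]; auto.
  rewrite P3 by lia. rewrite P2 by lia. auto.
  rewrite P3 by lia. auto.
Qed.

Lemma Rel_transfer G X act : subgroup_homeo_plus G -> is_group_action G X act ->
  forall f, G f -> forall a b a' b', act f a = a' -> act f b = b' ->
  forall t, Rel G X act t a b <-> Rel G X act (f t) a' b'.
Proof. intros HG Ha f Gf a b a' b' Ea Eb t. split; intro H.
  - subst. apply Rel_transport; auto.
  - pose proof HG as [H0 [H1 [H2 H3]]]. destruct (H3 f Gf) as [fi [Gfi [Hi1 Hi2]]].
    pose proof (Rel_transport G X act HG Ha fi Gfi _ _ _ H) as R.
    subst. rewrite Hi1 in R. rewrite !(act_cancel G X act Ha f fi) in R; auto. Qed.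

Lemma incl_transfer G X act : subgroup_homeo_plus G -> is_group_action G X act ->
  forall f, G f -> forall a b c d a' b' c' d', act f a = a' -> act f b = b' ->
  act f c = c' -> act f d = d' ->
  (forall t, Rel G X act t a b -> Rel G X act t c d) ->
  (forall t, Rel G X act t a' b' -> Rel G X act t c' d').
Proof. intros HG Ha f Gf a b c d a' b' c' d' Ea Eb Ec Ed Hi t Ht.
  pose proof HG as [H0 [H1 [H2 H3]]]. destruct (H3 f Gf) as [fi [Gfi [Hi1 Hi2]]].
  rewrite <- (Hi2 t) in Ht |- *.
  apply (Rel_transfer G X act HG Ha f Gf c d c' d' Ec Ed).
  apply Hi. apply (Rel_transfer G X act HG Ha f Gf a b a' b' Ea Eb). exact Ht. Qed.

Lemma compar (P Q : R -> Prop) : (forall t t', t' <= t -> P t -> P t') ->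
  (forall t t', t' <= t -> Q t -> Q t') ->
  (forall t, P t -> Q t) \/ (forall t, Q t -> P t).
Proof. intros HP HQ. destruct (classic (forall t, P t -> Q t)) as [h|h]; [left; exact h|right].
  apply not_all_ex_not in h. destruct h as [t0 h]. intros t Qt.
  apply imply_to_and in h. destruct h as [Pt0 nQt0].
  destruct (Rle_lt_dec t t0). apply (HP t0); auto.
  exfalso; apply nQt0. apply (HQ t); auto. lra. Qed.

Definition cyc G X (act : (R -> R) -> X -> X) := forall x y z : X, x <> y -> y <> z -> x <> z ->
  exists f, G f /\ act f x = y /\ act f y = z /\ act f z = x.

Lemma triple G X act : subgroup_homeo_plus G -> is_group_action G X act -> cyc G X act ->
  forall x y z, x <> y -> y <> z -> x <> z ->
  forall t, Rel G X act t x y <-> Rel G X act t y z.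
Proof. intros HG Ha Hc x y z Hxy Hyz Hxz.
  destruct (Hc x y z Hxy Hyz Hxz) as [f [Gf [E1 [E2 E3]]]].
  assert (M : forall u v t t', t' <= t -> Rel G X act t u v -> Rel G X act t' u v)
    by (intros; eapply Rel_mono; eauto).
  destruct (compar (fun t => Rel G X act t x y) (fun t => Rel G X act t y z) (M x y) (M y z)) as [h|h].
  - pose proof (incl_transfer G X act HG Ha f Gf _ _ _ _ _ _ _ _ E1 E2 E2 E3 h) as h2.
    pose proof (incl_transfer G X act HG Ha f Gf _ _ _ _ _ _ _ _ E2 E3 E3 E1 h2) as h3.
    intro t; split; auto.
  - pose proof (incl_transfer G X act HG Ha f Gf _ _ _ _ _ _ _ _ E2 E3 E1 E2 h) as h2.
    pose proof (incl_transfer G X act HG Ha f Gf _ _ _ _ _ _ _ _ E3 E1 E2 E3 h2) as h3.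
    intro t; split; auto.
Qed.

Lemma const G X act : subgroup_homeo_plus G -> is_group_action G X act -> cyc G X act ->
  forall u v x0 y0, u <> v -> x0 <> y0 ->
  forall t, Rel G X act t u v <-> Rel G X act t x0 y0.
Proof. intros HG Ha Hc.
  assert (S : forall t x y, Rel G X act t x y <-> Rel G X act t y x)
    by (intros; split; apply Rel_sym; auto).
  assert (T : forall x y z, x <> y -> y <> z -> x <> z ->
     forall t, Rel G X act t x y <-> Rel G X act t y z) by (apply triple; auto).
  assert (T' : forall x y z, x <> y -> y <> z -> x <> z ->
     forall t, Rel G X act t x y <-> Rel G X act t x z).
  { intros x y z h1 h2 h3 t. rewrite S. apply T; auto. }
  intros u v x0 y0 huv hxy t.
  destruct (classic (u = x0)) as [e|n1].
  - subst. destruct (classic (v = y0)) as [e|n2]. subst; tauto.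
    symmetry. apply T'; auto.
  - destruct (classic (u = y0)) as [e|n2].
    + subst. destruct (classic (v = x0)) as [e|n3]. subst; apply S.
      symmetry. apply T; auto.
    + rewrite (T' x0 y0 u) by auto. rewrite (S t x0 u).
      destruct (classic (v = x0)) as [e|n3]. subst; tauto.
      symmetry; apply T'; auto.
Qed.

Theorem proposition5p2 (G : (R -> R) -> Prop) :
  subgroup_homeo_plus G ->
  no_global_fixed_point G ->
  G0_nontrivial G ->
  transitivity_degree_le G 2.
Proof.
  intros HG Hnf [g0 [Gg0 [[a [b Hab]] [p Hp]]]] X act k Ha Hf [[s Hs] Htr].
  destruct (le_lt_dec k 2) as [hk|hk]; auto. exfalso.
  pose proof (G_sincr G HG) as Hinc.
  pose proof HG as [H0 [H1 [H2 H3]]].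
  pose proof Ha as [Ha1 Ha2].
  assert (Hcyc : cyc G X act).
  { intros x y z h1 h2 h3.
    destruct (prefix3 X k s x y z ltac:(lia) Hs h1 h2 h3) as [t1 [D1 [E10 [E11 E12]]]].
    destruct (prefix3 X k s y z x ltac:(lia) Hs h2 ltac:(auto) ltac:(auto)) as [t2 [D2 [E20 [E21 E22]]]].
    destruct (Htr t1 t2 D1 D2) as [f [Gf Hf']].
    exists f. split; auto.
    split; [|split].
    + rewrite <- E20 at 1. rewrite <- E10. apply Hf'; lia.
    + rewrite <- E21 at 1. rewrite <- E11. apply Hf'; lia.
    + rewrite <- E22 at 1. rewrite <- E12. apply Hf'; lia. }
  assert (Hpab : a <= p <= b).
  { destruct (Rlt_le_dec p a). exfalso; apply Hp, Hab; auto.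
    destruct (Rle_lt_dec p b). lra. exfalso; apply Hp, Hab; auto. }
  assert (Hx0 : exists x0, act g0 x0 <> x0).
  { apply NNPP. intro hn. apply Hp. apply Hf; auto. intro x. apply NNPP. intro h. apply hn. exists x; auto. }
  destruct Hx0 as [x0 Hx0]. set (y0 := act g0 x0).
  assert (Hxy0 : x0 <> y0) by (intro e; apply Hx0; symmetry; exact e).
  assert (Hc : forall u v, u <> v -> forall t, Rel G X act t u v <-> Rel G X act t x0 y0)
    by (intros; apply const; auto).
  assert (R0 : Rel G X act (a-1) x0 y0).
  { exists g0. split; auto. split; auto. exists a, b. split. lra. exact Hab. }
  destruct (classic (bound (fun t => Rel G X act t x0 y0))) as [Hb|Hb].
  - destruct (completeness _ Hb (ex_intro (fun t => Rel G X act t x0 y0) _ R0)) as [m [Hm1 Hm2]].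
    destruct (Hnf m) as [g [Gg Hgm]].
    destruct (H3 g Gg) as [gi [Ggi [Hi1 Hi2]]].
    assert (Cl : forall f fi, G f -> G fi -> (forall x, fi (f x) = x) ->
        forall t, Rel G X act t x0 y0 -> Rel G X act (f t) x0 y0).
    { intros f fi Gf Gfi Hfi t Ht.
      apply (Hc (act f x0) (act f y0)).
      intro e. apply Hxy0. rewrite <- (act_cancel G X act Ha f fi Gf Gfi Hfi x0), e.
      apply (act_cancel G X act Ha f fi); auto.
      apply Rel_transport; auto. }
    assert (m <= g m).
    { apply Hm2. intros s0 Hs0. rewrite <- (Hi2 s0).
      apply (incr_le g (Hinc g Gg)). apply Hm1. apply (Cl gi g); auto. }
    assert (m <= gi m).
    { apply Hm2. intros s0 Hs0. rewrite <- (Hi1 s0).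
      apply (incr_le gi (Hinc gi Ggi)). apply Hm1. apply (Cl g gi); auto. }
    assert (g m <= m).
    { rewrite <- (Hi2 m) at 2. apply (incr_le g (Hinc g Gg)). auto. }
    apply Hgm; lra.
  - assert (All : forall t, Rel G X act t x0 y0).
    { intro t. apply NNPP; intro hn. apply Hb. exists t. intros s0 Hs0.
      destruct (Rle_lt_dec s0 t); auto. exfalso; apply hn. eapply Rel_mono; [|exact Hs0]. lra. }
    assert (AllR : forall t u v, Rel G X act t u v).
    { intros t u v. destruct (classic (u = v)) as [e|n]. subst; apply Rel_refl; auto.
      apply Hc; auto. }
    destruct (All (b+1)) as [kk [[Gk [c [d [Hcc Hk]]]] Hkx]].
    destruct (H3 kk Gk) as [ki [Gki [Ki1 Ki2]]].
    set (w := fun u => ki (g0 u)).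
    assert (Gw : G w) by (unfold w; apply (H2 ki g0); auto).
    assert (Hw0 : act w x0 = x0).
    { unfold w. rewrite Ha2 by auto. fold y0. rewrite <- Hkx. apply (act_cancel G X act Ha kk ki); auto. }
    assert (Hwo : idout w (Rmin c a) (Rmax d b)).
    { apply (idout_comp ki g0 c d a b). apply (idout_inv kk ki c d Hk Ki1). exact Hab. }
    assert (Htriv : forall z, act w z = z).
    { intro z. destruct (AllR (Rmax d b + 1) x0 z) as [k' [[Gk' [c' [d' [Hc' Hk']]]] Hkz]].
      assert (Cm : forall u, w (k' u) = k' (w u)).
      { apply (idout_commute w k' (Rmin c a) (Rmax d b) c' d'); auto. lra. }
      rewrite <- Hkz. rewrite <- Ha2 by auto.
      replace (fun t => w (k' t)) with (fun t => k' (w t)) by (apply functional_extensionality; intro; auto).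
      rewrite Ha2 by auto. rewrite Hw0. reflexivity. }
    pose proof (Hf w Gw Htriv p) as Hwp. unfold w in Hwp.
    apply Hp. rewrite <- (Ki2 (g0 p)), Hwp. apply Hk. left. lra.
Qed.
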